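(* Let $(M,\circ,\mathrm{OR})$ be a free $\mathbb{D}$-module of rank 3 with scalar product and orientation. Every real subspace $S\subset M$ all of whose nonzero elements are sliding vectors has real dimension at most 3, and the elements of $E$ are precisely the real subspaces of $M$ of real dimension 3 all of whose nonzero elements are sliding vectors.
   Context: $\mathbb{D}=\{a+\epsilon b: a,b\in\mathbb{R}\}$, $\epsilon^2=0$, $\mathfrak{Re}(a+\epsilon b)=a$, $\mathfrak{Du}(a+\epsilon b)=b$. A scalar product is a symmetric $\mathbb{D}$-bilinear $\circ:M\times M\to\mathbb{D}$ with $\mathfrak{Re}(x\circ x)\ge0$, equality iff $x\in\epsilon M$. $E$ is the set of real 3-dimensional subspaces $P\subset M$ with $\mathfrak{Du}(x\circ y)=0$ for all $x,y\in P$ and $P\cap\epsilon M=\{0\}$. A sliding vector is an element $z\in M\setminus\epsilon M$ with zero pitch, i.e. with $\mathfrak{Du}(z\circ z)=0$ (equivalently, writing $z=(a+\epsilon b)u$ with $a>0$, $b\in\mathbb{R}$, $u\circ u=1$, one has $b=0$). *)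

(* Defs.v *)
From HB Require Import structures.
From mathcomp Require Import all_boot all_order all_algebra.
From mathcomp Require Import reals.
Set Implicit Arguments. Unset Strict Implicit. Unset Printing Implicit Defensive.
Import Order.TTheory GRing.Theory Num.Theory.
Local Open Scope ring_scope.

(* Dual numbers D = {a + eps b} are represented as pairs (a, b) : R * R,
   so Re = fst and Du = snd. A D-module is a real vector space M together
   with a real-linear map eps : M -> M with eps \o eps = 0 (the action of
   the dual unit). *)

Section DualModule.
Variables (R : fieldType) (M : vectType R) (eps : M -> M).

Definition dRe (d : R * R) : R := d.1.
Definition dDu (d : R * R) : R := d.2.

Definition dmul (d e : R * R) : R * R := (d.1 * e.1, d.1 * e.2 + d.2 * e.1).
Definition dadd (d e : R * R) : R * R := (d.1 + e.1, d.2 + e.2).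

Definition dscale (d : R * R) (x : M) : M := d.1 *: x + d.2 *: eps x.

Definition in_epsM (x : M) : Prop := exists y, x = eps y.

Definition free_rank3 : Prop :=
  exists e : 'I_3 -> M, forall x : M,
    exists! c : {ffun 'I_3 -> R * R}, x = \sum_(i < 3) dscale (c i) (e i).

End DualModule.

Section ScalarProduct.
Variables (R : realFieldType) (M : vectType R) (eps : M -> M).

Definition is_scalar_product (sp : M -> M -> R * R) : Prop :=
  [/\ forall x y, sp x y = sp y x,
      forall (d : R * R) x y z,
        sp (dscale eps d x + y) z = dadd (dmul d (sp x z)) (sp y z),
      forall x, 0 <= dRe (sp x x) &
      forall x, dRe (sp x x) = 0 <-> in_epsM eps x].

Definition sliding (sp : M -> M -> R * R) (z : M) : Prop :=
  ~ in_epsM eps z /\ dDu (sp z z) = 0.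

Definition in_E (sp : M -> M -> R * R) (P : {vspace M}) : Prop :=
  [/\ \dim P = 3%N,
      forall x y, x \in P -> y \in P -> dDu (sp x y) = 0 &
      forall x, x \in P -> in_epsM eps x -> x = 0].

End ScalarProduct.

(* Main.v *)
Require Import Defs.
From HB Require Import structures.
From mathcomp Require Import all_boot all_order all_algebra.
From mathcomp Require Import reals.
Import Order.TTheory GRing.Theory Num.Theory.
Local Open Scope ring_scope.

Lemma sp_add {R : realType} {M : vectType R} {eps : {linear M -> M}}
    {sp : M -> M -> R * R} (Hsp : is_scalar_product eps sp) x y z :
  sp (x + y) z = dadd (sp x z) (sp y z).
Proof.
case: Hsp => _ Hl _ _.
have := Hl (1, 0) x y z.
rewrite /dscale /= scale1r scale0r addr0 => ->.
rewrite /dmul /dadd /=; case: (sp x z) => a b /=.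
by rewrite !mul1r mul0r addr0.
Qed.

Lemma sp0 {R : realType} {M : vectType R} {eps : {linear M -> M}}
    {sp : M -> M -> R * R} (Hsp : is_scalar_product eps sp) z :
  sp 0 z = (0, 0).
Proof.
have := sp_add Hsp 0 0 z; rewrite addr0 /dadd.
case: (sp 0 z) => a b [] Ha Hb.
have -> : a = 0 by apply: (addrI a); rewrite addr0 -Ha.
have -> : b = 0 by apply: (addrI b); rewrite addr0 -Hb.
by [].
Qed.

Theorem proposition6 (R : realType) (M : vectType R) (eps : {linear M -> M})
    (sp : M -> M -> R * R)
    (Heps : forall x : M, eps (eps x) = 0)
    (Hfree : free_rank3 eps)
    (Hsp : is_scalar_product eps sp) :
  (forall S : {vspace M},
      (forall x, x \in S -> x != 0 -> sliding eps sp x) -> (\dim S <= 3)%N) /\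
  (forall P : {vspace M},
      in_E eps sp P <->
      (\dim P = 3%N /\ (forall x, x \in P -> x != 0 -> sliding eps sp x))).
Proof.
split.
  move=> S HS.
  case: Hfree => e He.
  pose X3 := [tuple eps (e i) | i < 3].
  pose X6 := [seq e i | i <- enum 'I_3] ++ [seq eps (e i) | i <- enum 'I_3].
  have X3i : forall i : 'I_3, X3`_i = eps (e i).
    by move=> i; rewrite -(tnth_nth 0) tnth_mktuple.
  have freeX3 : free X3.
    apply/freeP => k Hk i.
    have H0 : (0 : M) = \sum_(i < 3) dscale eps ([ffun j : 'I_3 => (0 : R, 0 : R)] i) (e i).
      by rewrite big1 // => j _; rewrite ffunE /dscale /= !scale0r addr0.
    have H1 : (0 : M) = \sum_(i < 3) dscale eps ([ffun j : 'I_3 => (0 : R, k j)] i) (e i).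
      rewrite -{1}Hk; apply: eq_bigr => j _.
      by rewrite ffunE /dscale /= scale0r add0r X3i.
    case: (He 0) => c [_ Hu].
    have := etrans (esym (Hu _ H1)) (Hu _ H0) => /(congr1 (fun f : {ffun 'I_3 -> R * R} => (f i).2)).
    by rewrite !ffunE.
  have dimX3 : \dim <<X3>> = 3%N by move/eqP: freeX3; rewrite size_tuple.
  have cap0 : (S :&: <<X3>> = 0)%VS.
    apply/eqP; rewrite -subv0; apply/subvP => x /memv_capP [xS xX].
    rewrite memv0; apply/negPn/negP => xn0.
    case: (HS x xS xn0) => Hn _; apply: Hn.
    exists (\sum_i coord X3 i x *: e i).
    rewrite linear_sum /= {1}(coord_span xX); apply: eq_bigr => i _.
    by rewrite linearZ /= -X3i.
  have dimM : (\dim (fullv : {vspace M}) <= 6)%N.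
    apply: (@leq_trans (\dim <<X6>>)); last first.
      by apply: leq_trans (dim_span X6) _; rewrite size_cat !size_map -enumT size_enum_ord.
      apply: dimvS; apply/subvP => x _.
      case: (He x) => c [-> _].
      apply: memv_suml => i _; rewrite /dscale; apply: memvD; apply: memvZ;
        apply: memv_span; rewrite mem_cat; apply/orP.
        by left; apply: map_f; rewrite mem_enum.
      by right; apply: map_f; rewrite mem_enum.
  have := dimvS (subvf (S + <<X3>>)%VS).
  rewrite dimv_disjoint_sum // dimX3 => H.
  have := leq_trans H dimM.
  by move=> H2; rewrite -(leq_add2r 3).
move=> P; split.
  case=> d Hdu Heps0; split => // x xP xn0; split.
    by move=> /(Heps0 x xP) /eqP; rewrite (negPf xn0).
  exact: Hdu.
case=> d HS.
have Hzz : forall z, z \in P -> dDu (sp z z) = 0.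
  move=> z zP; have [->|zn0] := eqVneq z 0; first by rewrite (sp0 Hsp).
  by case: (HS z zP zn0).
split => //.
  move=> x y xP yP.
  have := Hzz (x + y) (memvD xP yP).
  have [Hsym _ _ _] := Hsp.
  rewrite (sp_add Hsp) /dadd /dDu /= (Hsym x) (Hsym y).
  rewrite !(sp_add Hsp) /dadd /= (Hsym y x).
  have := Hzz x xP; have := Hzz y yP; rewrite /dDu => -> ->.
  rewrite add0r addr0 => /eqP; rewrite -mulr2n -mulr_natr mulf_eq0 pnatr_eq0 orbF.
  by move/eqP.
move=> x xP Hx; apply/eqP; apply/negPn/negP => xn0.
by case: (HS x xP xn0).
Qed.
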